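(* Let $\Sigma$ be a closed oriented surface and let $\mathcal T$ be a coherent double circuit configuration on $\Sigma$ in $\mathbb P^d$ ($d\ge 2$). Let $\mathcal T'$ be obtained from $\mathcal T$ by one of the moves (M1) (degree-two vertex removal or addition) or (M2) (urban renewal) described below, where the data are generic, so that all labels of $\mathcal T'$ are well defined (every intersection and span used below is a point, respectively a hyperplane) and $\mathcal T'$ is again a double circuit configuration in which all pairings entering the multi-ratios of its faces are nonzero. Then $\mathcal T'$ is coherent.
   Context: A tiling of a closed oriented surface $\Sigma$ is a bipartite graph $\Gamma$ (vertices colored white and black, each edge joining vertices of different colors) embedded in $\Sigma$ so that every face (connected component of $\Sigma\setminus\Gamma$) is an open disk, together with an assignment of a point of $\mathbb P^d$ to every white vertex and a hyperplane of $\mathbb P^d$ to every black vertex. Each face is a $2n$-gon whose boundary vertices alternate in color. Multi-ratio: for points $A_1,\dots,A_n$ and hyperplanes $\ell_1,\dots,\ell_n$ of $\mathbb P^d$, choose representing vectors $\mathbf A_i\in\mathbb C^{d+1}$ and covectors $\boldsymbol\ell_i$, and set $[A_1,\ell_1,\dots,A_n,\ell_n]=\frac{\boldsymbol\ell_1(\mathbf A_1)\cdots\boldsymbol\ell_n(\mathbf A_n)}{\boldsymbol\ell_1(\mathbf A_2)\cdots\boldsymbol\ell_n(\mathbf A_1)}$ (indices mod $n$; this is independent of the lifts). A face is coherent if the multi-ratio of the labels of its boundary vertices, read in clockwise order (with respect to the orientation of $\Sigma$), equals $1$; a tiling is coherent if every face is coherent. A circuit in a projective space is a linearly dependent set of points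 no proper subset of which is linearly dependent (e.g. two equal points; three pairwise distinct collinear points). Hyperplanes are regarded as points of the dual projective space. A tiling is a double circuit configuration if for every vertex, the labels of its neighbors form a circuit. Moves. (M1) Degree-two vertex removal: if a white vertex labeled $A$ has degree 2 with distinct black neighbors $u,u'$ (which, by the circuit condition, carry the same hyperplane $\ell$), delete this white vertex and its two edges and merge $u,u'$ into one black vertex labeled $\ell$ adjacent to all former neighbors of $u$ and $u'$. The same with colors (points/hyperplanes) interchanged. Degree-two vertex addition is the inverse operation. (M2) Urban renewal: suppose there is a quadrilateral face with boundary vertices, in cyclic order, $A$ (white), $c$ (black), $B$ (white), $d$ (black), where $A$'s other black neighbors are labeled $a_1,\dots,a_m$, $c$'s other white neighbors $C_1,\dots,C_k$, $B$'s other black neighbors $b_1,\dots,b_n$, $d$'s other white neighbors $D_1,\dots,D_l$. Delete the four edges $Ac,cB,Bd,dA$; insert new vertices $g$ (black), $E$ (white), $h$ (black), $F$ (white) forming a new quadrilateral face with cycle $g,E,h,F$, and add edges $A g$, $c E$, $B h$, $d F$ (so the square face is replaced by an inner square and four surrounding quadrilateral faces). The new labels are $E=\langle A,B\rangle\cap\langle C_1,\dots,C_k\rangle$, $F=\langle A,B\rangle\cap\langle D_1,\dots,D_l\rangle$, $g=\langle c\cap d,\ a_1\cap\dots\cap a_m\rangle$, $h=\langle c\cap d,\ b_1\cap\dots\cap b_n\rangle$, where $\langle\cdot\rangle$ denotes span; all other labels are unchanged. *)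

(* Defs.v *)
(* Tilings of closed oriented surfaces encoded as
   bipartite rotation systems (combinatorial maps). *)
From HB Require Import structures.
From mathcomp Require Import all_boot all_order all_algebra.
From mathcomp Require Import fingroup perm complex.
From mathcomp Require Import Rstruct.

Unset Implicit Arguments.
Unset Strict Implicit.
Unset Printing Implicit Defensive.

Import Order.TTheory GRing.Theory Num.Theory.
Local Open Scope ring_scope.

Definition Cplx : fieldType := (Rdefinitions.R)[i].

Section Tilings.
Variable K : fieldType.
Variable n : nat.  (* n = d+1 : vectors of K^(d+1) represent points of P^d *)

(* pairing of a covector l (a hyperplane) with a vector A (a point): l(A) *)
Definition pairing (l A : 'rV[K]_n) : K := \sum_(i < n) l 0 i * A 0 i.

Definition proj_eq (v v' : 'rV[K]_n) : Prop :=
  exists2 c : K, c != 0 & v' = c *: v.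

Definition multi_ratio (As ls : seq 'rV[K]_n) : K :=
  let m := size As in
  (\prod_(i < m) pairing ls`_i As`_i) /
  (\prod_(i < m) pairing ls`_i As`_(i.+1 %% m)).

(* A tiling: white vertices Wt, black vertices Bt, edges Et; each edge joins
   the white vertex [wv e] to the black vertex [bv e].  [wrot] (resp. [brot])
   is the counterclockwise (w.r.t. the orientation of the surface) successor
   of an edge around its white (resp. black) endpoint.  Such a rotation
   system determines the closed oriented surface and the cellular embedding
   (all faces open disks).  Labels: a representing vector for the point of
   each white vertex, a representing covector for the hyperplane of each
   black vertex. *)
Record tiling : Type := Tiling {
  Wt : finType; Bt : finType; Et : finType;
  wv : Et -> Wt; bv : Et -> Bt;
  wrot : {perm Et}; brot : {perm Et};
  ptlab : Wt -> 'rV[K]_n; hplab : Bt -> 'rV[K]_n }.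

Definition is_tiling (T : tiling) : Prop :=
  [/\ (forall x, exists e, wv T e = x),
      (forall y, exists e, bv T e = y),
      (forall e e', wv T e = wv T e' <-> fconnect (wrot T) e e'),
      (forall e e', bv T e = bv T e' <-> fconnect (brot T) e e')
    & (forall x, ptlab T x != 0) /\ (forall y, hplab T y != 0)].

(* faces: orbits of e |-> wrot (brot e); reading such an orbit from e gives
   the boundary A_1, l_1, A_2, l_2, ... of the face in clockwise order *)
Definition face_step (T : tiling) (e : Et T) : Et T := wrot T (brot T e).
Definition face_len (T : tiling) (e : Et T) : nat := fingraph.order (face_step T) e.
Definition face_points (T : tiling) (e : Et T) : seq 'rV[K]_n :=
  [seq ptlab T (wv T (iter i (face_step T) e)) | i <- iota 0 (face_len T e)].
Definition face_hyperplanes (T : tiling) (e : Et T) : seq 'rV[K]_n :=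
  [seq hplab T (bv T (iter i (face_step T) e)) | i <- iota 0 (face_len T e)].

Definition coherent_face (T : tiling) (e : Et T) : Prop :=
  multi_ratio (face_points T e) (face_hyperplanes T e) = 1.
Definition coherent (T : tiling) : Prop := forall e : Et T, coherent_face T e.

Definition dependent {I : finType} (S : {set I}) (v : I -> 'rV[K]_n) : Prop :=
  exists c : I -> K, (exists2 i, i \in S & c i != 0) /\
                     \sum_(i in S) c i *: v i = 0.
Definition circuit {I : finType} (S : {set I}) (v : I -> 'rV[K]_n) : Prop :=
  dependent S v /\ forall S' : {set I}, S' \proper S -> ~ dependent S' v.

Definition white_nbrs (T : tiling) (x : Wt T) : {set Bt T} :=
  bv T @: [set e | wv T e == x].
Definition black_nbrs (T : tiling) (y : Bt T) : {set Wt T} :=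
  wv T @: [set e | bv T e == y].

Definition double_circuit (T : tiling) : Prop :=
  (forall x : Wt T, circuit (white_nbrs T x) (hplab T)) /\
  (forall y : Bt T, circuit (black_nbrs T y) (ptlab T)).

Definition swap_colors (T : tiling) : tiling :=
  @Tiling (Bt T) (Wt T) (Et T) (bv T) (wv T) (brot T) (wrot T)
          (hplab T) (ptlab T).

(* (M1) removal of a white vertex x0 of degree two with edges e1, e2 to
   distinct black vertices u = bv e1, u' = bv e2, which get merged.
   fE, fW identify edges / white vertices of T' with those of T that
   survive; fB maps black vertices of T onto those of T', identifying
   exactly u and u'. *)
Definition remove_white_deg2 (T T' : tiling) : Prop :=
  exists (x0 : Wt T) (e1 e2 : Et T)
         (fE : Et T' -> Et T) (fW : Wt T' -> Wt T) (fB : Bt T -> Bt T'),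
  [/\ [/\ e1 != e2, wv T e1 = x0, wv T e2 = x0,
          (forall e, wv T e = x0 -> e = e1 \/ e = e2) & bv T e1 != bv T e2],
      [/\ injective fE, (forall e', fE e' != e1 /\ fE e' != e2)
        & (forall e, e != e1 -> e != e2 -> exists e', fE e' = e)],
      [/\ injective fW, (forall x', fW x' != x0)
        & (forall x, x != x0 -> exists x', fW x' = x)],
      [/\ (forall y', exists y, fB y = y'),
          (forall y y', fB y = fB y' <->
             [\/ y = y', y = bv T e1 /\ y' = bv T e2
                       | y = bv T e2 /\ y' = bv T e1])
        & (forall e', wv T (fE e') = fW (wv T' e') /\
                      fB (bv T (fE e')) = bv T' e')] &
      [/\ (forall e', fE (wrot T' e') = wrot T (fE e')),
          (forall e', fE (brot T' e') =
             let x := brot T (fE e') in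
             if x == e1 then
               (if brot T e2 == e2 then brot T e1 else brot T e2)
             else if x == e2 then
               (if brot T e1 == e1 then brot T e2 else brot T e1)
             else x),
          (forall x', proj_eq (ptlab T (fW x')) (ptlab T' x'))
        & (forall y, proj_eq (hplab T y) (hplab T' (fB y)))]].

Definition move_M1 (T T' : tiling) : Prop :=
  [\/ remove_white_deg2 T T', remove_white_deg2 T' T,
      remove_white_deg2 (swap_colors T) (swap_colors T')
    | remove_white_deg2 (swap_colors T') (swap_colors T)].

(* subspaces of K^n as row spaces of square matrices (mxalgebra) *)
Definition span_pts {I : finType} (S : {set I}) (v : I -> 'rV[K]_n) : 'M[K]_n :=
  (\sum_(i in S) <<v i>>)%MS.
Definition hyperplane (l : 'rV[K]_n) : 'M[K]_n := kermx l^T.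
Definition meet_hyps {I : finType} (S : {set I}) (l : I -> 'rV[K]_n) : 'M[K]_n :=
  (\bigcap_(i in S) hyperplane (l i))%MS.

Definition is_meet_point (X Y : 'M[K]_n) (v : 'rV[K]_n) : Prop :=
  [/\ \rank (X :&: Y)%MS = 1%N, v != 0 & (v <= X :&: Y)%MS].
Definition is_join_hyperplane (X Y : 'M[K]_n) (l : 'rV[K]_n) : Prop :=
  [/\ \rank (X + Y)%MS = n.-1, l != 0 & (X + Y <= hyperplane l)%MS].

(* (M2) urban renewal at the quadrilateral face whose boundary, read from
   the edge e1, is A = wv e1, c = bv e1, B = wv e2, d = bv e2, with edges
   e1 = Ac, f1 = cB, e2 = Bd, f2 = dA.  The edges of T' are the images
   under iE of the other edges of T plus eight new edges
   nAg ncE nBh ndF (connectors) and ngE nEh nhF nFg (new square);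
   new white vertices xE xF, new black vertices yg yh. *)
Definition urban_renewal (T T' : tiling) : Prop :=
  exists e1 : Et T,
  let f1 := brot T e1 in let e2 := wrot T f1 in let f2 := brot T e2 in
  let A := wv T e1 in let c := bv T e1 in
  let B := wv T e2 in let d := bv T e2 in
  let kept := fun e => e \notin [:: e1; f1; e2; f2] in
  exists (iE : Et T -> Et T') (iW : Wt T -> Wt T') (iB : Bt T -> Bt T')
         (xE xF : Wt T') (yg yh : Bt T')
         (nAg ncE nBh ndF ngE nEh nhF nFg : Et T'),
  let news := [:: nAg; ncE; nBh; ndF; ngE; nEh; nhF; nFg] in
  [/\ (* the face is a quadrilateral with distinct vertices *)
      [/\ wrot T f2 = e1, A != B & c != d],
      [/\ (forall e e', kept e -> kept e' -> iE e = iE e' -> e = e'),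
          uniq news, (forall e, kept e -> iE e \notin news)
        & (forall e', e' \in news \/ exists2 e, kept e & iE e = e')],
      [/\ [/\ injective iW, xE != xF, (forall x, iW x != xE /\ iW x != xF)
            & (forall x', [\/ x' = xE, x' = xF | exists x, iW x = x'])],
          [/\ injective iB, yg != yh, (forall y, iB y != yg /\ iB y != yh)
            & (forall y', [\/ y' = yg, y' = yh | exists y, iB y = y'])],
          (forall e, kept e ->
             wv T' (iE e) = iW (wv T e) /\ bv T' (iE e) = iB (bv T e))
        & [/\ wv T' nAg = iW A /\ bv T' nAg = yg,
              wv T' ncE = xE /\ bv T' ncE = iB c,
              wv T' nBh = iW B /\ bv T' nBh = yh,
              wv T' ndF = xF /\ bv T' ndF = iB d &
              [/\ wv T' ngE = xE /\ bv T' ngE = yg,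
                  wv T' nEh = xE /\ bv T' nEh = yh,
                  wv T' nhF = xF /\ bv T' nhF = yh &
                  wv T' nFg = xF /\ bv T' nFg = yg]]],
      [/\ (forall e, kept e -> wrot T' (iE e) =
             if wrot T e == f2 then nAg
             else if wrot T e == f1 then nBh else iE (wrot T e)),
          wrot T' nAg = (if wrot T e1 == f2 then nAg else iE (wrot T e1)),
          wrot T' nBh = (if wrot T e2 == f1 then nBh else iE (wrot T e2)),
          [/\ wrot T' ncE = ngE, wrot T' ngE = nEh & wrot T' nEh = ncE]
        & [/\ wrot T' ndF = nhF, wrot T' nhF = nFg & wrot T' nFg = ndF]] /\
      [/\ (forall e, kept e -> brot T' (iE e) =
             if brot T e == e1 then ncE
             else if brot T e == e2 then ndF else iE (brot T e)),
          brot T' ncE = (if brot T f1 == e1 then ncE else iE (brot T f1)),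
          brot T' ndF = (if brot T f2 == e2 then ndF else iE (brot T f2)),
          [/\ brot T' ngE = nAg, brot T' nAg = nFg & brot T' nFg = ngE]
        & [/\ brot T' nEh = nhF, brot T' nhF = nBh & brot T' nBh = nEh]] &
      [/\ (forall x, proj_eq (ptlab T x) (ptlab T' (iW x))),
          (forall y, proj_eq (hplab T y) (hplab T' (iB y))),
          (* E = <A,B> ∩ <C_1..C_k>,  F = <A,B> ∩ <D_1..D_l> *)
          is_meet_point (<<ptlab T A>> + <<ptlab T B>>)%MS
            (span_pts (wv T @: [set e | (bv T e == c) && (e \notin [:: e1; f1])])
                      (ptlab T))
            (ptlab T' xE),
          is_meet_point (<<ptlab T A>> + <<ptlab T B>>)%MS
            (span_pts (wv T @: [set e | (bv T e == d) && (e \notin [:: e2; f2])])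
                      (ptlab T))
            (ptlab T' xF) &
          (* g = <c ∩ d, a_1 ∩ .. ∩ a_m>,  h = <c ∩ d, b_1 ∩ .. ∩ b_n> *)
          is_join_hyperplane (hyperplane (hplab T c) :&: hyperplane (hplab T d))%MS
            (meet_hyps (bv T @: [set e | (wv T e == A) && (e \notin [:: e1; f2])])
                       (hplab T))
            (hplab T' yg) /\
          is_join_hyperplane (hyperplane (hplab T c) :&: hyperplane (hplab T d))%MS
            (meet_hyps (bv T @: [set e | (wv T e == B) && (e \notin [:: f1; e2])])
                       (hplab T))
            (hplab T' yh)]].

End Tilings.

Arguments Tiling {K n}.
Arguments Wt {K n}.
Arguments Bt {K n}.
Arguments Et {K n}.
Arguments wv {K n}.
Arguments bv {K n}.
Arguments wrot {K n}.
Arguments brot {K n}.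
Arguments ptlab {K n}.
Arguments hplab {K n}.
Arguments is_tiling {K n}.
Arguments coherent {K n}.
Arguments double_circuit {K n}.
Arguments move_M1 {K n}.
Arguments urban_renewal {K n}.
Arguments pairing {K n}.
Arguments proj_eq {K n}.
Arguments multi_ratio {K n}.
Arguments face_points {K n}.
Arguments face_hyperplanes {K n}.
Arguments coherent_face {K n}.
Arguments dependent {K n I}.
Arguments circuit {K n I}.

(* Main.v *)
Require Import Defs.
From HB Require Import structures.
From mathcomp Require Import all_boot all_order all_algebra.
From mathcomp Require Import fingroup perm complex.
From mathcomp Require Import Rstruct.
From mathcomp Require Import ring.
Import GRing.Theory.
Local Open Scope ring_scope.

Section Gen.
Variable K : fieldType.
Variable n : nat.
Implicit Types T : tiling K n.

Definition wt T (e : Et T) : K := pairing (hplab T (bv T e)) (ptlab T (wv T e)).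

Definition good T : Prop := exists phi : Et T -> K,
  (forall x, phi x != 0) /\
  (forall x, wt T x * phi x = wt T (brot T x) * phi (face_step K n T x)).

Lemma pairingC (l A : 'rV[K]_n) : pairing l A = pairing A l.
Proof. by rewrite /pairing; apply: eq_bigr => i _; rewrite mulrC. Qed.

Lemma pairingDr (l A B : 'rV[K]_n) : pairing l (A + B) = pairing l A + pairing l B.
Proof. by rewrite /pairing -big_split; apply: eq_bigr => i _; rewrite mxE mulrDr. Qed.

Lemma pairingZr (l A : 'rV[K]_n) a : pairing l (a *: A) = a * pairing l A.
Proof. by rewrite /pairing mulr_sumr; apply: eq_bigr => i _; rewrite mxE mulrCA. Qed.

Lemma pairingZl (l A : 'rV[K]_n) a : pairing (a *: l) A = a * pairing l A.
Proof. by rewrite pairingC pairingZr pairingC. Qed.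

Lemma wv_wrot T : is_tiling T -> forall e, wv T (wrot T e) = wv T e.
Proof. by case=> _ _ H _ _ e; symmetry; apply/H; apply: fconnect1. Qed.

Lemma bv_brot T : is_tiling T -> forall e, bv T (brot T e) = bv T e.
Proof. by case=> _ _ _ H _ e; symmetry; apply/H; apply: fconnect1. Qed.

Lemma face_inj T : injective (face_step K n T).
Proof. by move=> x y; rewrite /face_step => /perm_inj /perm_inj. Qed.

Lemma MR_eq T (e : Et T) : is_tiling T ->
  multi_ratio (face_points T e) (face_hyperplanes T e) =
  (\prod_(i < face_len K n T e) wt T (iter i (face_step K n T) e)) /
  (\prod_(i < face_len K n T e) wt T (brot T (iter i (face_step K n T) e))).
Proof.
move=> hT; rewrite /multi_ratio size_map size_iota; congr (_ / _).
  apply: eq_bigr => i _.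
  by rewrite /face_points /face_hyperplanes !(nth_map 0%N) ?size_iota // nth_iota.
apply: eq_bigr => i _.
have hi := ltn_ord i.
have hm : (0 < face_len K n T e)%N := fingraph.order_gt0 _ _.
rewrite /face_points /face_hyperplanes !(nth_map 0%N) ?size_iota ?ltn_pmod //.
rewrite !nth_iota ?ltn_pmod // !add0n /wt bv_brot //.
congr (pairing _ (ptlab T _)).
have -> : iter ((i.+1) %% face_len K n T e) (face_step K n T) e = iter i.+1 (face_step K n T) e.
  case: (ltnP i.+1 (face_len K n T e)) => h; first by rewrite modn_small.
  have -> : i.+1 = face_len K n T e by apply/eqP; rewrite eqn_leq h andbT.
  by rewrite modnn /= iter_order //; apply: face_inj.
by rewrite iterS /face_step wv_wrot.
Qed.


Lemma prod_shift (m : nat) (F : nat -> K) : F m = F 0%N ->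
  \prod_(i < m) F i.+1 = \prod_(i < m) F i.
Proof.
case: m => [|m] h; first by rewrite !big_ord0.
by rewrite big_ord_recr big_ord_recl /= h mulrC.
Qed.

Lemma good_coherent T : is_tiling T -> (forall e, wt T e != 0) -> good T -> coherent T.
Proof.
move=> hT hw [phi [phi0 hphi]] e; rewrite /coherent_face MR_eq //.
set f := face_step K n T; set m := face_len K n T e.
have hD : \prod_(i < m) wt T (brot T (iter i f e)) != 0.
  by apply/prodf_neq0 => i _.
have hP : \prod_(i < m) phi (iter i f e) != 0 by apply/prodf_neq0 => i _.
apply/eqP; rewrite (can2_eq (divfK hD) (mulfK hD)) mul1r; apply/eqP.
apply: (mulIf hP).
rewrite -{2}(prod_shift m (fun i => phi (iter i f e))); last first.
  by rewrite /m /face_len iter_order //; apply: face_inj.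
rewrite -!big_split /=; apply: eq_bigr => i _; exact: hphi.
Qed.

Lemma coherent_wt T : is_tiling T -> coherent T -> forall e, wt T e != 0.
Proof.
move=> hT hc e; have := hc e; rewrite /coherent_face MR_eq //.
rewrite /face_len -(fingraph.orderSpred (face_step K n T)) big_ord_recl /= => h.
apply/eqP => h0; move: h; rewrite h0 !mul0r => /eqP; rewrite eq_sym oner_eq0.
done.
Qed.

Lemma coherent_good T : is_tiling T -> coherent T -> good T.
Proof.
move=> hT hc; have hw := coherent_wt _ hT hc.
set f := face_step K n T.
have finj : injective f by apply: face_inj.
pose rho x := wt T x / wt T (brot T x).
pose phi x := \prod_(i < findex f (froot f x) x) rho (iter i f (froot f x)).
have rho0 x : rho x != 0 by rewrite /rho mulf_neq0 // invr_eq0.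
have csym : connect_sym (frel f) := fconnect_sym finj.
have hcon x : fconnect f (froot f x) x by rewrite csym; apply: connect_root.
have hroot x : froot f (f x) = froot f x.
  by apply/esym/eqP; rewrite (root_connect csym); apply: fconnect1.
have hfull r : \prod_(i < fingraph.order f r) rho (iter i f r) = 1.
  have := hc r; rewrite /coherent_face MR_eq // -prodf_div.
  by [].
have key x : phi (f x) = phi x * rho x.
  rewrite /phi hroot; set r := froot f x.
  have hk := findex_max (hcon x); have hi := iter_findex (hcon x).
  set k := findex f r x in hk hi *.
  case: (ltnP k.+1 (fingraph.order f r)) => h.
    have -> : findex f r (f x) = k.+1.
      by rewrite -{1}hi -iterS findex_iter.
    by rewrite big_ord_recr /= hi.
  have ek : k.+1 = fingraph.order f r by apply/eqP; rewrite eqn_leq h hk.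
  have -> : f x = r by rewrite -hi -iterS ek iter_order.
  rewrite findex0 big_ord0.
  have := hfull r; rewrite -ek big_ord_recr /= hi => ->; done.
exists phi; split.
  by move=> x; apply/prodf_neq0 => i _.
move=> x; rewrite key /rho; field; exact: hw.
Qed.


Lemma wt_swap T e : wt (swap_colors K n T) e = wt T e.
Proof. by rewrite /wt pairingC. Qed.

Lemma is_tiling_swap T : is_tiling T -> is_tiling (swap_colors K n T).
Proof. by case=> h1 h2 h3 h4 [h5 h6]; split. Qed.

Lemma swapK T : swap_colors K n (swap_colors K n T) = T.
Proof. by case: T. Qed.

Lemma good_swap T : is_tiling T -> (forall e, wt T e != 0) -> good T ->
  good (swap_colors K n T).
Proof.
move=> hT hw [phi [phi0 hphi]].
exists (fun x => (phi (wrot T x) * wt T x)^-1); split.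
  by move=> x; rewrite invr_eq0 mulf_neq0.
move=> x; rewrite !wt_swap /face_step /=.
have := hphi (wrot T x); rewrite /face_step => h.
have := hw x; have := phi0 (wrot T x); have := hw (wrot T x).
move=> h1 h2 h3.
have h4 : wt T (brot T (wrot T x)) * phi (wrot T (brot T (wrot T x))) != 0 by rewrite -h mulf_neq0.
rewrite -[wt T (brot T (wrot T x))](mulfK (phi0 (wrot T (brot T (wrot T x))))) -h.
field.
by rewrite ?h1 ?h2 ?h3 ?phi0.
Qed.


Lemma proj_fun (I : finType) (v v' : I -> 'rV[K]_n) :
  (forall i, proj_eq (v i) (v' i)) ->
  exists c : I -> K, (forall i, c i != 0) /\ forall i, v' i = c i *: v i.
Proof.
move=> h; have [c h1 h2] := @fin_all_exists2 I (fun _ => K)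
   (fun i c => c != 0) (fun i c => v' i = c *: v i) h.
by exists c.
Qed.
Arguments proj_fun {I v v'}.

Lemma wrot_deg2 T (x0 : Wt T) e1 e2 : is_tiling T -> e1 != e2 ->
  wv T e1 = x0 -> wv T e2 = x0 -> (forall e, wv T e = x0 -> e = e1 \/ e = e2) ->
  wrot T e1 = e2.
Proof.
move=> hT hne h1 h2 hx.
have := hx (wrot T e1); rewrite wv_wrot // h1 => /(_ erefl) [] // he.
have hc : fconnect (wrot T) e1 e2 by case: hT => _ _ H _ _; apply/H; rewrite h1 h2.
have := iter_findex hc; rewrite iter_fix // => he12.
by move: hne; rewrite he12 eqxx.
Qed.
Arguments wrot_deg2 {T x0 e1 e2}.

Lemma removal T T' : is_tiling T -> is_tiling T' -> (forall e, wt T e != 0) ->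
  good T -> remove_white_deg2 K n T T' -> good T'.
Proof.
move=> hT hT' hw [phi [phi0 hphi]].
case=> x0 [e1 [e2 [fE [fW [fB [[he12 hw1 hw2 hx0 hb12] [fEinj fEne fEsurj]
  _ [fBsurj fBeq fBcomp] [hwrot hbrot hpt hhp]]]]]]].
have [al [al0 hal]] := proj_fun hpt.
have [be [be0 hbe]] := proj_fun hhp.
have hwt e' : wt T' e' = be (bv T (fE e')) * al (wv T' e') * wt T (fE e').
  rewrite /wt hal -(proj2 (fBcomp e')) hbe (proj1 (fBcomp e')).
  by rewrite pairingZl pairingZr mulrA.
exists (fun e' => phi (fE e') / al (wv T' e')); split.
  by move=> e'; rewrite mulf_neq0 // invr_eq0.
have hL e' : wt T' e' * (phi (fE e') / al (wv T' e')) =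
    be (bv T (fE e')) * (wt T (fE e') * phi (fE e')).
  by rewrite hwt; field.
move=> e' /=.
rewrite (hL e') /face_step hwrot (wv_wrot _ hT') hwt.
rewrite [RHS](_ : _ = be (bv T (fE (brot T' e'))) * (wt T (fE (brot T' e')) *
   phi (wrot T (fE (brot T' e'))))); last by field.
have w12 : wrot T e1 = e2 by apply: (wrot_deg2 hT he12 hw1 hw2 hx0).
have w21 : wrot T e2 = e1.
  by apply: (wrot_deg2 hT _ hw2 hw1) => [|e /hx0 []]; rewrite 1?eq_sym //; auto.
have hbeq : be (bv T e1) * wt T e1 = be (bv T e2) * wt T e2.
  have hf : fB (bv T e1) = fB (bv T e2) by apply/fBeq; apply: Or32.
  have := congr1 (fun l => pairing l (ptlab T x0)) (hbe (bv T e1)).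
  rewrite hf hbe /wt hw1 hw2 !pairingZl => ->.
  done.
set e := fE e'.
have claim : forall a b, (a = e1 /\ b = e2) \/ (a = e2 /\ b = e1) ->
   brot T e = a ->
   be (bv T e) * (wt T e * phi e) =
   be (bv T (if brot T b == b then brot T a else brot T b)) *
     (wt T (if brot T b == b then brot T a else brot T b) *
      phi (wrot T (if brot T b == b then brot T a else brot T b))).
  move=> a b hab hea.
  have wab : wrot T a = b by case: hab => [[-> ->]|[-> ->]].
  have wba : wrot T b = a by case: hab => [[-> ->]|[-> ->]].
  have hbeab : be (bv T a) * wt T a = be (bv T b) * wt T b.
    by case: hab => [[-> ->]|[-> ->]].
  have he := hphi e; rewrite /face_step hea wab in he.
  have hb := hphi b; rewrite /face_step in hb.
  have hbv : bv T e = bv T a by rewrite -hea bv_brot.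
  case: eqP => hbb.
    rewrite bv_brot // -(hphi a) /face_step -hbv.
    rewrite hbb wba in hb.
    have : phi b = phi a by apply: (mulfI (hw b)).
    by move=> hpb; rewrite he hpb.
  by rewrite bv_brot // -hb hbv he mulrA hbeab mulrA.
have := hbrot e'; rewrite -/e /= => ->.
have [h1|n1] := eqVneq (brot T e) e1.
  by apply: claim h1; left.
have [h2|n2] := eqVneq (brot T e) e2.
  by apply: claim h2; right.

by rewrite bv_brot // hphi.
Qed.


Lemma addition T T' : is_tiling T -> is_tiling T' -> (forall e, wt T e != 0) ->
  good T' -> remove_white_deg2 K n T T' -> good T.
Proof.
move=> hT hT' hw [phi [phin0 hphi]].
case=> x0 [e1 [e2 [fE [fW [fB [[he12 hw1 hw2 hx0 hb12] [fEinj fEne fEsurj]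
  _ [fBsurj fBeq fBcomp] [hwrot hbrot hpt hhp]]]]]]].
have [al [al0 hal]] := proj_fun hpt.
have [be [be0 hbe]] := proj_fun hhp.
have hwt e' : wt T' e' = be (bv T (fE e')) * al (wv T' e') * wt T (fE e').
  rewrite /wt hal -(proj2 (fBcomp e')) hbe (proj1 (fBcomp e')).
  by rewrite pairingZl pairingZr mulrA.
have w12 : wrot T e1 = e2 by apply: (wrot_deg2 hT he12 hw1 hw2 hx0).
have w21 : wrot T e2 = e1.
  by apply: (wrot_deg2 hT _ hw2 hw1) => [|e /hx0 []]; rewrite 1?eq_sym //; auto.
have hbeq : be (bv T e1) * wt T e1 = be (bv T e2) * wt T e2.
  have hf : fB (bv T e1) = fB (bv T e2) by apply/fBeq; apply: Or32.
  have := congr1 (fun l => pairing l (ptlab T x0)) (hbe (bv T e1)).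
  rewrite hf hbe /wt hw1 hw2 !pairingZl => ->.
  done.
pose phi0 x := if [pick e' | fE e' == x] is Some e' then al (wv T' e') * phi e' else 1.
have hphi0 e' : phi0 (fE e') = al (wv T' e') * phi e'.
  rewrite /phi0; case: pickP => [y /eqP /fEinj -> // | /(_ e')].
  by rewrite eqxx.
have phi00 x : phi0 x != 0.
  rewrite /phi0; case: pickP => [y _|_]; last exact: oner_neq0.
  by rewrite mulf_neq0.
pose V a b := if brot T a != a then wt T (brot T a) * phi0 (wrot T (brot T a)) / wt T a
  else if brot T b != b then wt T (brot T b) * phi0 (wrot T (brot T b)) / wt T b
  else 1.
pose ph x := if x == e1 then V e1 e2 else if x == e2 then V e2 e1 else phi0 x.
have V0 a b : V a b != 0.
  rewrite /V; case: ifP => _; first by rewrite !mulf_neq0 // invr_eq0.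
  case: ifP => _; last exact: oner_neq0.
  by rewrite !mulf_neq0 // invr_eq0.
have phout x : x != e1 -> x != e2 -> ph x = phi0 x.
  by move=> h1 h2; rewrite /ph (negbTE h1) (negbTE h2).
have ne21 : (e2 == e1) = false by rewrite eq_sym (negbTE he12).
have hbv12 : forall a b, (a = e1 /\ b = e2) \/ (a = e2 /\ b = e1) ->
   [/\ wrot T a = b, wrot T b = a, bv T a != bv T b,
       be (bv T a) * wt T a = be (bv T b) * wt T b & ph a = V a b /\ ph b = V b a].
  move=> a b [[-> ->]|[-> ->]]; split => //; try by rewrite eq_sym.
    by rewrite /ph eqxx ne21 eqxx.
  by rewrite /ph eqxx ne21 eqxx.
have nab a b : (a = e1 /\ b = e2) \/ (a = e2 /\ b = e1) ->
   forall z, z != a -> z != b -> (z != e1) && (z != e2).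
  by move=> [[-> ->]|[-> ->]] z h1 h2; rewrite h1 h2.
exists ph; split.
  by move=> x; rewrite /ph; case: ifP => _; [|case: ifP => _].
move=> x; rewrite /face_step.
have caseA : forall a b, (a = e1 /\ b = e2) \/ (a = e2 /\ b = e1) ->
    wt T a * ph a = wt T (brot T a) * ph (wrot T (brot T a)).
  move=> a b hab; have [wab wba bvab hbe' [pha phb]] := hbv12 a b hab.
  rewrite pha; have [hbr|hbr] := eqVneq (brot T a) a.
    rewrite hbr wab phb /V hbr eqxx /=.
    by case: ifP.
  have hz : (wrot T (brot T a) != e1) && (wrot T (brot T a) != e2).
    apply: (nab a b hab).
      apply: contraNneq bvab => h.
      by rewrite -(bv_brot _ hT a) (perm_inj (etrans h (esym wba))).
    apply: contraNneq hbr => h.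
    by rewrite (perm_inj (etrans h (esym wab))).
  case/andP: hz => hz1 hz2; rewrite (phout _ hz1 hz2) /V hbr /=.
  by field.
have [hx1|hx1] := eqVneq x e1; first by rewrite hx1; apply: (caseA e1 e2); left.
have [hx2|hx2] := eqVneq x e2; first by rewrite hx2; apply: (caseA e2 e1); right.
have [e' he'] := fEsurj x hx1 hx2.
have hsm := hphi e'; rewrite /face_step !hwt in hsm.
have := hbrot e'; rewrite he' /= => hb.
rewrite he' in hsm; rewrite (phout _ hx1 hx2) -he' hphi0 he'.
have hwr e : wrot T (fE e) = fE (wrot T' e) by rewrite hwrot.
have caseB : forall a b, (a = e1 /\ b = e2) \/ (a = e2 /\ b = e1) -> brot T x = a ->
    wt T x * (al (wv T' e') * phi e') = wt T a * ph (wrot T a).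
  move=> a b hab hxa; have [wab wba bvab hbe' [pha phb]] := hbv12 a b hab.
  rewrite wab phb.
  have hbvx : bv T x = bv T a by rewrite -hxa bv_brot.
  have hy : fE (brot T' e') = if brot T b == b then brot T a else brot T b.
    by rewrite hb hxa; case: hab => [[-> ->]|[-> ->]]; rewrite ?eqxx ?ne21.
  rewrite hy in hsm.
  have hsm' : be (bv T a) * (wt T x * (al (wv T' e') * phi e')) =
      be (bv T (if brot T b == b then brot T a else brot T b)) *
      (wt T (if brot T b == b then brot T a else brot T b) *
       phi0 (wrot T (if brot T b == b then brot T a else brot T b))).
    rewrite -hy hwr hphi0 (wv_wrot _ hT') hy -hbvx.
    rewrite [LHS](_ : _ = be (bv T x) * al (wv T' e') * wt T x * phi e'); last by ring.
    by rewrite hsm; ring.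
  have xa : x != a by case: hab => [[-> _]|[-> _]].
  apply: (mulfI (be0 (bv T a))); rewrite hsm' /V.
  have [hbb|hbb] := eqVneq (brot T b) b.
    have hba : brot T a != a.
      by apply: contra xa => /eqP h; rewrite -h in hxa; rewrite (perm_inj hxa).
    rewrite /= hba bv_brot //; field; exact: hw.
  rewrite /= (mulrA (be (bv T a))).
  rewrite hbe' bv_brot //; field; exact: hw.
have [h1|n1] := eqVneq (brot T x) e1.
  by rewrite h1; apply: (caseB e1 e2) => //; left.
have [h2|n2] := eqVneq (brot T x) e2.
  by rewrite h2; apply: (caseB e2 e1) => //; right.
rewrite (negbTE n1) (negbTE n2) in hb.
have hz1 : wrot T (brot T x) != e1.
  by apply: contra n2 => /eqP h; rewrite -w21 in h; rewrite (perm_inj h).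
have hz2 : wrot T (brot T x) != e2.
  by apply: contra n1 => /eqP h; rewrite -w12 in h; rewrite (perm_inj h).
rewrite (phout _ hz1 hz2) -hb hwr hphi0 (wv_wrot _ hT').
rewrite hb bv_brot // in hsm.
apply: (mulfI (be0 (bv T x))).
rewrite [LHS](_ : _ = be (bv T x) * al (wv T' e') * wt T x * phi e'); last by ring.
rewrite hsm -hb; ring.
Qed.


Lemma geom_scalar (ca cb da db Ga Gb Ha Hb s t s' t' : K) :
  ca != 0 -> cb != 0 -> da != 0 -> db != 0 ->
  ca * db = cb * da -> cb * Ga = ca * Gb -> cb * Ha = ca * Hb ->
  let GE := s * Ga + t * Gb in let cE := s * ca + t * cb in
  let HE := s * Ha + t * Hb in
  let GF := s' * Ga + t' * Gb in let dF := s' * da + t' * db in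
  let HF := s' * Ha + t' * Hb in
  [/\ GE = Ga * cE / ca, HF = Hb * dF / db, GF = Ga * dF / da,
      HE = Hb * cE / cb & HE * GF = HF * GE].
Proof.
move=> ca0 cb0 da0 db0 hsq hG hH /=.
have eG : Gb = cb * Ga / ca by rewrite hG; field.
have eH : Hb = cb * Ha / ca by rewrite hH; field.
have eD : db = cb * da / ca by rewrite -hsq; field.
rewrite eG eH eD; split; field => //.
all: try by rewrite ?ca0 ?cb0 ?da0 ?db0.
Qed.

Lemma mx11_eq0 (M : 'M[K]_1) : (M == 0) = (M 0 0 == 0).
Proof.
apply/eqP/eqP => [->|h]; first by rewrite mxE.
by apply/matrixP => i j; rewrite !ord1 h mxE.
Qed.

Lemma hyp_mem (l v : 'rV[K]_n) : (v <= hyperplane K n l)%MS = (pairing l v == 0).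
Proof.
rewrite /hyperplane sub_kermx mx11_eq0 !mxE /pairing.
by congr (_ == 0); apply: eq_bigr => i _; rewrite mxE mulrC.
Qed.

Lemma span2 (A B v : 'rV[K]_n) : (v <= <<A>> + <<B>>)%MS ->
  exists s t, v = s *: A + t *: B.
Proof.
case/sub_addsmxP => [[u1 u2] /= ->].
have h1 : (u1 *m <<A>> <= A)%MS.
  by apply: submx_trans (submxMl u1 <<A>>%MS) _; rewrite genmxE.
have h2 : (u2 *m <<B>> <= B)%MS.
  by apply: submx_trans (submxMl u2 <<B>>%MS) _; rewrite genmxE.
case/sub_rVP: h1 => s ->; case/sub_rVP: h2 => t ->.
by exists s, t.
Qed.


Lemma urban T T' : is_tiling T -> is_tiling T' -> (forall e, wt T e != 0) ->
  (forall e, wt T' e != 0) -> good T -> urban_renewal T T' -> good T'.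
Proof.
move=> hT hT' hw hw' [phi [phi0 hphi]].
case=> e1 /= [iE [iW [iB [xE [xF [yg [yh [nAg [ncE [nBh [ndF [ngE [nEh [nhF [nFg H]]]]]]]]]]]]]]].
set f1 := brot T e1 in H; set e2 := wrot T f1 in H; set f2 := brot T e2 in H.
case: H => [[hq1 hAB hcd] [iEinj newsU iEnews iEsurj]
  [[iWinj hxEF iWne iWsurj] [iBinj hygh iBne iBsurj] hiE
   [hnAg hncE hnBh hndF [hngE hnEh hnhF hnFg]]]
  [[wk wnAg wnBh [wcE wgE wEh] [wdF whF wFg]] [bk bcE bdF [bgE bAg bFg] [bEh bhF bBh]]]
  [hpt hhp hE hF [hg hh]]].
move: newsU; rewrite !inE !negb_or -!andbA => /andP[nn1 /andP[nn2 /andP[nn3 /andP[nn4 /andP[nn5 /andP[nn6 /andP[nn7 /andP[nn8 /andP[nn9 /andP[nn10 /andP[nn11 /andP[nn12 /andP[nn13 /andP[nn14 /andP[nn15 /andP[nn16 /andP[nn17 /andP[nn18 /andP[nn19 /andP[nn20 /andP[nn21 /andP[nn22 /andP[nn23 /andP[nn24 /andP[nn25 /andP[nn26 /andP[nn27 /andP[nn28 _]]]]]]]]]]]]]]]]]]]]]]]]]]]].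
have nn1' : (ncE == nAg) = false by rewrite eq_sym (negbTE nn1).
move/negbTE: nn1 => nn1.
have nn2' : (nBh == nAg) = false by rewrite eq_sym (negbTE nn2).
move/negbTE: nn2 => nn2.
have nn3' : (ndF == nAg) = false by rewrite eq_sym (negbTE nn3).
move/negbTE: nn3 => nn3.
have nn4' : (ngE == nAg) = false by rewrite eq_sym (negbTE nn4).
move/negbTE: nn4 => nn4.
have nn5' : (nEh == nAg) = false by rewrite eq_sym (negbTE nn5).
move/negbTE: nn5 => nn5.
have nn6' : (nhF == nAg) = false by rewrite eq_sym (negbTE nn6).
move/negbTE: nn6 => nn6.
have nn7' : (nFg == nAg) = false by rewrite eq_sym (negbTE nn7).
move/negbTE: nn7 => nn7.
have nn8' : (nBh == ncE) = false by rewrite eq_sym (negbTE nn8).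
move/negbTE: nn8 => nn8.
have nn9' : (ndF == ncE) = false by rewrite eq_sym (negbTE nn9).
move/negbTE: nn9 => nn9.
have nn10' : (ngE == ncE) = false by rewrite eq_sym (negbTE nn10).
move/negbTE: nn10 => nn10.
have nn11' : (nEh == ncE) = false by rewrite eq_sym (negbTE nn11).
move/negbTE: nn11 => nn11.
have nn12' : (nhF == ncE) = false by rewrite eq_sym (negbTE nn12).
move/negbTE: nn12 => nn12.
have nn13' : (nFg == ncE) = false by rewrite eq_sym (negbTE nn13).
move/negbTE: nn13 => nn13.
have nn14' : (ndF == nBh) = false by rewrite eq_sym (negbTE nn14).
move/negbTE: nn14 => nn14.
have nn15' : (ngE == nBh) = false by rewrite eq_sym (negbTE nn15).
move/negbTE: nn15 => nn15.
have nn16' : (nEh == nBh) = false by rewrite eq_sym (negbTE nn16).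
move/negbTE: nn16 => nn16.
have nn17' : (nhF == nBh) = false by rewrite eq_sym (negbTE nn17).
move/negbTE: nn17 => nn17.
have nn18' : (nFg == nBh) = false by rewrite eq_sym (negbTE nn18).
move/negbTE: nn18 => nn18.
have nn19' : (ngE == ndF) = false by rewrite eq_sym (negbTE nn19).
move/negbTE: nn19 => nn19.
have nn20' : (nEh == ndF) = false by rewrite eq_sym (negbTE nn20).
move/negbTE: nn20 => nn20.
have nn21' : (nhF == ndF) = false by rewrite eq_sym (negbTE nn21).
move/negbTE: nn21 => nn21.
have nn22' : (nFg == ndF) = false by rewrite eq_sym (negbTE nn22).
move/negbTE: nn22 => nn22.
have nn23' : (nEh == ngE) = false by rewrite eq_sym (negbTE nn23).
move/negbTE: nn23 => nn23.
have nn24' : (nhF == ngE) = false by rewrite eq_sym (negbTE nn24).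
move/negbTE: nn24 => nn24.
have nn25' : (nFg == ngE) = false by rewrite eq_sym (negbTE nn25).
move/negbTE: nn25 => nn25.
have nn26' : (nhF == nEh) = false by rewrite eq_sym (negbTE nn26).
move/negbTE: nn26 => nn26.
have nn27' : (nFg == nEh) = false by rewrite eq_sym (negbTE nn27).
move/negbTE: nn27 => nn27.
have nn28' : (nFg == nhF) = false by rewrite eq_sym (negbTE nn28).
move/negbTE: nn28 => nn28.
have NE := (nn1, nn1', nn2, nn2', nn3, nn3', nn4, nn4', nn5, nn5', nn6, nn6', nn7, nn7', nn8, nn8', nn9, nn9', nn10, nn10', nn11, nn11', nn12, nn12', nn13, nn13', nn14, nn14', nn15, nn15', nn16, nn16', nn17, nn17', nn18, nn18', nn19, nn19', nn20, nn20', nn21, nn21', nn22, nn22', nn23, nn23', nn24, nn24', nn25, nn25', nn26, nn26', nn27, nn27', nn28, nn28').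
have hbf1 : bv T f1 = bv T e1 by rewrite /f1 bv_brot.
have hbf2 : bv T f2 = bv T e2 by rewrite /f2 bv_brot.
have hwf1 : wv T f1 = wv T e2 by rewrite /e2 wv_wrot.
have hwf2 : wv T f2 = wv T e1 by rewrite -hq1 wv_wrot.
have fs1 : face_step K n T e1 = e2 by [].
have fs2 : face_step K n T e2 = e1 by rewrite /face_step -/f2 hq1.
have d_e1f1 : e1 != f1 by apply: contraNneq hAB => h; rewrite -hwf1 -h.
have d_e1e2 : e1 != e2 by apply: contraNneq hcd => ->.
have d_e1f2 : e1 != f2 by apply: contraNneq hcd => h; rewrite -hbf2 -h.
have d_f1e2 : f1 != e2 by apply: contraNneq hcd => h; rewrite -hbf1 h.
have d_f1f2 : f1 != f2 by apply: contraNneq hcd => h; rewrite -hbf1 h hbf2.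
have d_e2f2 : e2 != f2 by apply: contraNneq hAB => h; rewrite -hwf2 -h.
have [al [al0 hal]] := proj_fun hpt.
have [be [be0 hbe]] := proj_fun hhp.
set Aa := ptlab T (wv T e1); set Bb := ptlab T (wv T e2).
set cc := hplab T (bv T e1); set dd := hplab T (bv T e2).
set Ev := ptlab T' xE; set Fv := ptlab T' xF.
set Gv := hplab T' yg; set Hv := hplab T' yh.
have we1 : wt T e1 = pairing cc Aa by [].
have we2 : wt T e2 = pairing dd Bb by [].
have wf1 : wt T f1 = pairing cc Bb by rewrite /wt hbf1 hwf1.
have wf2 : wt T f2 = pairing dd Aa by rewrite /wt hbf2 hwf2.
have ca0 : pairing cc Aa != 0 by rewrite -we1.
have db0 : pairing dd Bb != 0 by rewrite -we2.
have cb0 : pairing cc Bb != 0 by rewrite -wf1.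
have da0 : pairing dd Aa != 0 by rewrite -wf2.
have hsq : pairing cc Aa * pairing dd Bb = pairing cc Bb * pairing dd Aa.
  have h1 := hphi e1; have h2 := hphi e2.
  rewrite fs1 -/f1 in h1; rewrite fs2 -/f2 in h2.
  apply: (mulIf (phi0 e1)); apply: (mulIf (phi0 e2)).
  rewrite -we1 -we2 -wf1 -wf2.
  transitivity ((wt T e1 * phi e1) * (wt T e2 * phi e2)); first by ring.
  by rewrite h1 h2; ring.
have [s [t hEv]] : exists s t, Ev = s *: Aa + t *: Bb.
  by case: hE => _ _; rewrite sub_capmx => /andP[/span2 h _].
have [s' [t' hFv]] : exists s t, Fv = s *: Aa + t *: Bb.
  by case: hF => _ _; rewrite sub_capmx => /andP[/span2 h _].
pose Z := pairing cc Bb *: Aa + (- pairing cc Aa) *: Bb.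
have hZ : (Z <= hyperplane K n cc :&: hyperplane K n dd)%MS.
  rewrite sub_capmx !hyp_mem /Z !pairingDr !pairingZr.
  apply/andP; split; apply/eqP; first by ring.
  by rewrite mulNr -hsq; ring.
have hGZ : pairing cc Bb * pairing Gv Aa = pairing cc Aa * pairing Gv Bb.
  case: hg => _ _ hsub.
  have : (Z <= hyperplane K n Gv)%MS.
    by apply: submx_trans hsub; apply: submx_trans (addsmxSl _ _).
  rewrite hyp_mem /Z pairingDr !pairingZr mulNr => /eqP/eqP.
  by rewrite addr_eq0 opprK => /eqP.
have hHZ : pairing cc Bb * pairing Hv Aa = pairing cc Aa * pairing Hv Bb.
  case: hh => _ _ hsub.
  have : (Z <= hyperplane K n Hv)%MS.
    by apply: submx_trans hsub; apply: submx_trans (addsmxSl _ _).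
  rewrite hyp_mem /Z pairingDr !pairingZr mulNr => /eqP/eqP.
  by rewrite addr_eq0 opprK => /eqP.
have [I1 I2 I3 I4 I5] := geom_scalar _ _ _ _ _ _ _ _ s t s' t' ca0 cb0 da0 db0 hsq hGZ hHZ.
have eX l : pairing l Ev = s * pairing l Aa + t * pairing l Bb.
  by rewrite hEv pairingDr !pairingZr.
have eY l : pairing l Fv = s' * pairing l Aa + t' * pairing l Bb.
  by rewrite hFv pairingDr !pairingZr.
rewrite -!eX -!eY in I1 I2 I3 I4 I5.
have keptP e : (e \notin [:: e1; f1; e2; f2]) = [&& e != e1, e != f1, e != e2 & e != f2].
  by rewrite !inE !negb_or.
have WkE e : e \notin [:: e1; f1; e2; f2] ->
    wt T' (iE e) = be (bv T e) * al (wv T e) * wt T e.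
  move=> h; rewrite /wt (proj1 (hiE e h)) (proj2 (hiE e h)) hal hbe pairingZl pairingZr.
  by rewrite mulrA.
have WAg : wt T' nAg = al (wv T e1) * pairing Gv Aa.
  by rewrite /wt (proj1 hnAg) (proj2 hnAg) hal pairingZr.
have WBh : wt T' nBh = al (wv T e2) * pairing Hv Bb.
  by rewrite /wt (proj1 hnBh) (proj2 hnBh) hal pairingZr.
have WcE : wt T' ncE = be (bv T e1) * pairing cc Ev.
  by rewrite /wt (proj1 hncE) (proj2 hncE) hbe pairingZl.
have WdF : wt T' ndF = be (bv T e2) * pairing dd Fv.
  by rewrite /wt (proj1 hndF) (proj2 hndF) hbe pairingZl.
have WgE : wt T' ngE = pairing Gv Ev by rewrite /wt (proj1 hngE) (proj2 hngE).
have WEh : wt T' nEh = pairing Hv Ev by rewrite /wt (proj1 hnEh) (proj2 hnEh).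
have WhF : wt T' nhF = pairing Hv Fv by rewrite /wt (proj1 hnhF) (proj2 hnhF).
have WFg : wt T' nFg = pairing Gv Fv by rewrite /wt (proj1 hnFg) (proj2 hnFg).
have cE0 : pairing cc Ev != 0 by have := hw' ncE; rewrite WcE mulf_eq0 negb_or => /andP[].
have dF0 : pairing dd Fv != 0 by have := hw' ndF; rewrite WdF mulf_eq0 negb_or => /andP[].
have GE0 : pairing Gv Ev != 0 by rewrite -WgE.
have GF0 : pairing Gv Fv != 0 by rewrite -WFg.
pose ph x := if x == nAg then phi f2 / al (wv T e1)
  else if x == nBh then phi f1 / al (wv T e2)
  else if x == ncE then be (bv T e1) * wt T f1 * phi f1 / wt T' ncE
  else if x == ndF then be (bv T e2) * wt T f2 * phi f2 / wt T' ndF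
  else if x == ngE then be (bv T e1) * wt T e1 * phi (wrot T e1) / wt T' ncE
  else if x == nhF then be (bv T e2) * wt T e2 * phi (wrot T e2) / wt T' ndF
  else if x == nFg then 1
  else if x == nEh then wt T' nFg / wt T' ngE
  else if [pick e | (e \notin [:: e1; f1; e2; f2]) && (iE e == x)] is Some e
       then phi e / al (wv T e) else 1.
have pAg : ph nAg = phi f2 / al (wv T e1) by rewrite /ph eqxx.
have pBh : ph nBh = phi f1 / al (wv T e2) by rewrite /ph ?NE eqxx.
have pcE : ph ncE = be (bv T e1) * wt T f1 * phi f1 / wt T' ncE by rewrite /ph ?NE eqxx.
have pdF : ph ndF = be (bv T e2) * wt T f2 * phi f2 / wt T' ndF by rewrite /ph ?NE eqxx.
have pgE : ph ngE = be (bv T e1) * wt T e1 * phi (wrot T e1) / wt T' ncE.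
  by rewrite /ph ?NE eqxx.
have phF : ph nhF = be (bv T e2) * wt T e2 * phi (wrot T e2) / wt T' ndF.
  by rewrite /ph ?NE eqxx.
have pFg : ph nFg = 1 by rewrite /ph ?NE eqxx.
have pEh : ph nEh = wt T' nFg / wt T' ngE by rewrite /ph ?NE eqxx.
have pK e : e \notin [:: e1; f1; e2; f2] -> ph (iE e) = phi e / al (wv T e).
  move=> h; have := iEnews e h; rewrite !inE !negb_or /ph.
  move=> /andP[/negbTE-> /andP[/negbTE-> /andP[/negbTE-> /andP[/negbTE->
     /andP[/negbTE-> /andP[/negbTE-> /andP[/negbTE-> /negbTE->]]]]]]].
  case: pickP => [e0 /andP [h0 /eqP he0]|/(_ e)]; last by rewrite h eqxx.
  by rewrite (iEinj _ _ h0 h he0).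
have pJ y : y != e1 -> y != e2 ->
    ph (if y == f2 then nAg else if y == f1 then nBh else iE y) = phi y / al (wv T y).
  move=> h1 h2; have [->|n2] := eqVneq y f2; first by rewrite pAg hwf2.
  have [->|n1] := eqVneq y f1; first by rewrite pBh hwf1.
  by rewrite pK // keptP h1 h2 n1 n2.
have keptW b : b \notin [:: e1; f1; e2; f2] -> wrot T b != e1 /\ wrot T b != e2.
  rewrite keptP => /and4P [_ b1 _ b2]; split.
    by apply: contra b2 => /eqP h; rewrite -hq1 in h; rewrite (perm_inj h).
  by apply: contra b1 => /eqP h; rewrite /e2 in h; rewrite (perm_inj h).
have hK b : b \notin [:: e1; f1; e2; f2] ->
    wt T' (iE b) * ph (wrot T' (iE b)) = be (bv T b) * (wt T b * phi (wrot T b)).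
  move=> hb; have [w1 w2] := keptW b hb.
  rewrite WkE // wk // pJ // wv_wrot //; field; exact: al0.
have nph x : ph x != 0.
  rewrite /ph; repeat case: ifP => _; try case: pickP => [? _|_];
  by rewrite ?mulf_neq0 ?invr_eq0 ?oner_neq0 ?hw ?hw' ?al0 ?be0 ?phi0.
exists ph; split; first exact: nph.
have al1 := al0 (wv T e1); have al2 := al0 (wv T e2).
have be1 := be0 (bv T e1); have be2 := be0 (bv T e2).
have nwcE := hw' ncE; have nwdF := hw' ndF; have nwgE := hw' ngE.
have EqAg : wt T' nAg * ph nAg = wt T' (brot T' nAg) * ph (face_step K n T' nAg).
  rewrite /face_step bAg wFg pAg pdF WAg WFg WdF wf2 I3.
  by field; rewrite ?al1 ?be1 ?be2 ?dF0 ?da0.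
have EqBh : wt T' nBh * ph nBh = wt T' (brot T' nBh) * ph (face_step K n T' nBh).
  rewrite /face_step bBh wEh pBh pcE WBh WEh WcE wf1 I4.
  by field; rewrite ?al2 ?be1 ?cE0 ?cb0.
have EqFg : wt T' nFg * ph nFg = wt T' (brot T' nFg) * ph (face_step K n T' nFg).
  rewrite /face_step bFg wgE pFg pEh; field; exact: nwgE.
have EqEh : wt T' nEh * ph nEh = wt T' (brot T' nEh) * ph (face_step K n T' nEh).
  rewrite /face_step bEh whF pFg pEh WEh WhF WFg WgE mulrA I5.
  by field.
have EqgE : wt T' ngE * ph ngE = wt T' (brot T' ngE) * ph (face_step K n T' ngE).
  rewrite /face_step bgE wnAg.
  have hw1 : wv T (wrot T e1) = wv T e1 by rewrite wv_wrot.
  have n1 : wrot T e1 != f1.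
    by apply: contraNneq hAB => h; rewrite -hw1 h hwf1.
  have a1 : wrot T e1 != e1.
    by apply: contraNneq d_e1f2 => h; apply/eqP/(@perm_inj _ (wrot T)); rewrite h hq1.
  have a2 : wrot T e1 != e2 by apply: contraNneq hAB => h; rewrite -hw1 h.
  have := pJ _ a1 a2; rewrite (negbTE n1) => ->.
  rewrite pgE WgE WAg WcE we1 hw1 I1.
  by field; rewrite ?al1 ?be1 ?cE0 ?ca0.
have EqhF : wt T' nhF * ph nhF = wt T' (brot T' nhF) * ph (face_step K n T' nhF).
  rewrite /face_step bhF wnBh.
  have hw2 : wv T (wrot T e2) = wv T e2 by rewrite wv_wrot.
  have n2 : wrot T e2 != f2.
    by apply: contraNneq hAB => h; rewrite -hw2 h hwf2.
  have a1 : wrot T e2 != e1 by apply: contraNneq hAB => h; rewrite -hw2 h.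
  have a2 : wrot T e2 != e2.
    by apply: contraNneq d_f1e2 => h; apply/eqP/esym/(@perm_inj _ (wrot T)); rewrite h.
  have := pJ _ a1 a2; rewrite (negbTE n2) => ->.
  rewrite phF WhF WBh WdF we2 hw2 I2.
  by field; rewrite ?al2 ?be2 ?dF0 ?db0.
have EqcE : wt T' ncE * ph ncE = wt T' (brot T' ncE) * ph (face_step K n T' ncE).
  rewrite /face_step bcE.
  have hf := hphi f1; rewrite /face_step in hf.
  have [h|h] := eqVneq (brot T f1) e1.
    rewrite wcE pcE pgE; rewrite h in hf.
    by rewrite -(mulrA (be _)) hf !mulrA.
  have hb : brot T f1 \notin [:: e1; f1; e2; f2].
    rewrite keptP h /=; apply/and3P; split.
    - apply: contraNneq d_e1f1 => h'.
      by apply/eqP/esym/(@perm_inj _ (brot T)); exact: h'.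
    - by apply: contraNneq hcd => h'; rewrite -h' bv_brot // hbf1.
    - by apply: contraNneq hcd => h'; rewrite -hbf2 -h' bv_brot // hbf1.
  rewrite hK // pcE bv_brot // hbf1 -hf; field; exact: nwcE.
have EqdF : wt T' ndF * ph ndF = wt T' (brot T' ndF) * ph (face_step K n T' ndF).
  rewrite /face_step bdF.
  have hf := hphi f2; rewrite /face_step in hf.
  have [h|h] := eqVneq (brot T f2) e2.
    rewrite wdF pdF phF; rewrite h in hf.
    by rewrite -(mulrA (be _)) hf !mulrA.
  have hb : brot T f2 \notin [:: e1; f1; e2; f2].
    rewrite keptP h /= ?andbT; apply/and3P; split.
    - by apply: contraNneq hcd => h'; rewrite -h' bv_brot // hbf2.
    - by apply: contraNneq hcd => h'; rewrite -hbf1 -h' bv_brot // hbf2.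
    - apply: contraNneq d_e2f2 => h'.
      by apply/eqP/esym/(@perm_inj _ (brot T)); exact: h'.
  rewrite hK // pdF bv_brot // hbf2 -hf; field; exact: nwdF.
move=> x; case: (iEsurj x) => [hx|[e he <-]].
  rewrite !inE in hx.
  case/orP: hx => [/eqP->//|]; case/orP => [/eqP->//|]; case/orP => [/eqP->//|].
  case/orP => [/eqP->//|]; case/orP => [/eqP->//|]; case/orP => [/eqP->//|].
  by case/orP => /eqP->.
have hf := hphi e; rewrite /face_step in hf.
rewrite /face_step bk // WkE // pK //.
have hbv : bv T (brot T e) = bv T e by rewrite bv_brot.
have [h1|h1] := eqVneq (brot T e) e1.
  rewrite wcE pgE; rewrite h1 in hf hbv.
  rewrite hbv -(mulrA (be _) (wt T e1)) -hf.
  by field; rewrite ?al0 ?nwcE.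
have [h2|h2] := eqVneq (brot T e) e2.
  rewrite wdF phF; rewrite h2 in hf hbv; rewrite hbv -(mulrA (be _) (wt T e2)) -hf.
  by field; rewrite ?al0 ?nwdF.
have hb : brot T e \notin [:: e1; f1; e2; f2].
  move: he; rewrite !keptP h1 h2 /= => /and4P [n1 _ n2 _]; apply/andP; split.
    by apply: contra n1 => /eqP h; rewrite (perm_inj h).
  by apply: contra n2 => /eqP h; rewrite /f2 in h; rewrite (perm_inj h).
rewrite hK // hbv -hf; field; exact: al0.
Qed.

End Gen.

Theorem mainTheorem1 (d : nat) (T T' : tiling Cplx d.+1) :
  (2 <= d)%N ->
  is_tiling T -> double_circuit T -> coherent T ->
  (move_M1 T T' \/ urban_renewal T T') ->
  is_tiling T' -> double_circuit T' ->
  (forall e : Et T', pairing (hplab T' (bv T' e)) (ptlab T' (wv T' e)) != 0) ->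
  coherent T'.
Proof.
move=> _ hT _ hc hmove hT' _ hw'.
have hwT := coherent_wt _ _ _ hT hc.
have gT := coherent_good _ _ _ hT hc.
have hw'' : forall e, wt _ _ T' e != 0 := hw'.
apply: (good_coherent _ _ _ hT' hw'').
have sT := is_tiling_swap _ _ _ hT; have sT' := is_tiling_swap _ _ _ hT'.
have swT : forall e, wt _ _ (swap_colors _ _ T) e != 0 by move=> e; rewrite wt_swap.
have swT' : forall e, wt _ _ (swap_colors _ _ T') e != 0 by move=> e; rewrite wt_swap.
have gsT := good_swap _ _ _ hT hwT gT.
case: hmove => [[h|h|h|h]|h].
- exact: (removal _ _ _ _ hT hT' hwT gT h).
- exact: (addition _ _ _ _ hT' hT hw'' gT h).
- rewrite -(swapK _ _ T'); apply: good_swap => //.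
  exact: (removal _ _ _ _ sT sT' swT gsT h).
- rewrite -(swapK _ _ T'); apply: good_swap => //.
  exact: (addition _ _ _ _ sT' sT swT' gsT h).
- exact: (urban _ _ _ _ hT hT' hwT hw'' gT h).
Qed.
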